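(* Let $f_1,\dots,f_m:\mathbb R^n\to\mathbb R$ be continuously differentiable with $\nabla f_j$ being $L_j$-Lipschitz, and set $L=\max_j L_j$. Let $C_1>0$, $\tau>0$ and $x,y\in\mathbb R^n$ with $\|x\|+\|y\|\le C_1$, and let $\lambda_\tau(x,y)\in\operatorname*{argmin}_{\lambda\in\Delta_m}\{\langle\lambda,F(x)-F(y)\rangle+\frac{\tau}{2}\|DF(y)\lambda\|^2\}$. Then $$\Big\|DF(y)\lambda_\tau(x,y)-\mathrm{proj}_{C(x)}\Big(\frac{y-x}{\tau}\Big)\Big\|\le\sqrt{C_2L}\,\|x-y\|^{1/2}+\sqrt{\frac{10L}{\tau}}\,\|x-y\|,$$ where $C_2:=LC_1+2\max_{1\le j\le m}\|\nabla f_j(0)\|$.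
   Context: $F=(f_1,\dots,f_m)^\top$. $\Delta_m$ is the unit simplex in $\mathbb R^m$. $DF(y)=[\nabla f_1(y),\dots,\nabla f_m(y)]\in\mathbb R^{n\times m}$. $C(x)=\mathrm{conv}\{\nabla f_1(x),\dots,\nabla f_m(x)\}$, and $\mathrm{proj}_C$ is the Euclidean projection onto the closed convex set $C$. *)

(* Defs.v *)
From HB Require Import structures.
From mathcomp Require Import all_boot all_order all_algebra.
From mathcomp Require Import all_classical all_reals all_analysis.
Set Implicit Arguments. Unset Strict Implicit. Unset Printing Implicit Defensive.
Import Order.TTheory GRing.Theory Num.Theory.
Import numFieldNormedType.Exports.
Local Open Scope ring_scope.

Section Defs.
Variable R : realType.

(* Euclidean inner product and norm on R^n (the library norm on 'rV is the max norm) *)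
Definition dotv (n : nat) (u v : 'rV[R]_n) : R := \sum_(i < n) u 0 i * v 0 i.
Definition enorm (n : nat) (u : 'rV[R]_n) : R := Num.sqrt (dotv u u).

Definition grad (n : nat) (f : 'rV[R]_n -> R) (x : 'rV[R]_n) : 'rV[R]_n :=
  \row_(i < n) ('d f x (delta_mx 0 i : 'rV[R]_n)).

Definition simplex (m : nat) (lam : 'rV[R]_m) : Prop :=
  (forall j, 0 <= lam 0 j) /\ \sum_(j < m) lam 0 j = 1.

Definition DFmul (m n : nat) (f : 'I_m -> 'rV[R]_n -> R) (y : 'rV[R]_n)
  (lam : 'rV[R]_m) : 'rV[R]_n := \sum_(j < m) lam 0 j *: grad (f j) y.

Definition convgrad (m n : nat) (f : 'I_m -> 'rV[R]_n -> R) (x : 'rV[R]_n)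
  (c : 'rV[R]_n) : Prop := exists mu, simplex mu /\ c = DFmul f x mu.

Definition is_proj (n : nat) (C : 'rV[R]_n -> Prop) (z p : 'rV[R]_n) : Prop :=
  C p /\ forall c, C c -> enorm (z - p) <= enorm (z - c).

Definition lam_obj (m n : nat) (f : 'I_m -> 'rV[R]_n -> R) (tau : R)
  (x y : 'rV[R]_n) (lam : 'rV[R]_m) : R :=
  \sum_(j < m) lam 0 j * (f j x - f j y) + tau / 2 * enorm (DFmul f y lam) ^+ 2.

Definition is_argmin_simplex (m n : nat) (f : 'I_m -> 'rV[R]_n -> R) (tau : R)
  (x y : 'rV[R]_n) (lam : 'rV[R]_m) : Prop :=
  simplex lam /\ forall mu, simplex mu -> lam_obj f tau x y lam <= lam_obj f tau x y mu.

End Defs.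

(* Main.v *)
Require Import Defs.
From HB Require Import structures.
From mathcomp Require Import all_boot all_order all_algebra.
From mathcomp Require Import all_classical all_reals all_analysis.
Import Order.TTheory GRing.Theory Num.Theory.
Import numFieldNormedType.Exports.
Local Open Scope ring_scope.

Lemma dotDl {R : realType} {n : nat} (u w v : 'rV[R]_n) :
  dotv (u + w) v = dotv u v + dotv w v.
Proof. rewrite /dotv -big_split; apply: eq_bigr => i _; by rewrite !mxE mulrDl. Qed.

Lemma dotZl {R : realType} {n : nat} (a : R) (u v : 'rV[R]_n) :
  dotv (a *: u) v = a * dotv u v.
Proof. rewrite /dotv mulr_sumr; apply: eq_bigr => i _; by rewrite !mxE mulrA. Qed.

Lemma dotC {R : realType} {n : nat} (u v : 'rV[R]_n) : dotv u v = dotv v u.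
Proof. rewrite /dotv; apply: eq_bigr => i _; by rewrite mulrC. Qed.

Lemma dotNl {R : realType} {n : nat} (u v : 'rV[R]_n) : dotv (- u) v = - dotv u v.
Proof. by rewrite -scaleN1r dotZl mulN1r. Qed.

Lemma dotBl {R : realType} {n : nat} (u w v : 'rV[R]_n) :
  dotv (u - w) v = dotv u v - dotv w v.
Proof. by rewrite dotDl dotNl. Qed.

Lemma dotDr {R : realType} {n : nat} (u w v : 'rV[R]_n) :
  dotv v (u + w) = dotv v u + dotv v w.
Proof. by rewrite dotC dotDl !(dotC v). Qed.

Lemma dotBr {R : realType} {n : nat} (u w v : 'rV[R]_n) :
  dotv v (u - w) = dotv v u - dotv v w.
Proof. by rewrite dotC dotBl !(dotC v). Qed.

Lemma dotZr {R : realType} {n : nat} (a : R) (u v : 'rV[R]_n) :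
  dotv v (a *: u) = a * dotv v u.
Proof. by rewrite dotC dotZl dotC. Qed.

Lemma dot0l {R : realType} {n : nat} (v : 'rV[R]_n) : dotv 0 v = 0.
Proof. rewrite /dotv big1 // => i _; by rewrite mxE mul0r. Qed.

Lemma dot_suml {R : realType} {n m : nat} (F : 'I_m -> 'rV[R]_n) v :
  dotv (\sum_(j < m) F j) v = \sum_(j < m) dotv (F j) v.
Proof.
rewrite /dotv; under eq_bigr => i _ do rewrite summxE mulr_suml.
by rewrite exchange_big.
Qed.

Lemma dot_ge0 {R : realType} {n : nat} (u : 'rV[R]_n) : 0 <= dotv u u.
Proof. rewrite /dotv; apply: sumr_ge0 => i _; by rewrite -expr2 sqr_ge0. Qed.

Lemma dot_eq0 {R : realType} {n : nat} (u : 'rV[R]_n) : dotv u u = 0 -> u = 0.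
Proof.
move=> h; apply/rowP => i; rewrite mxE.
have h0 : u 0 i * u 0 i = 0.
  by apply: (psumr_eq0P _ h) => // j _; rewrite -expr2 sqr_ge0.
by move: h0 => /eqP; rewrite mulf_eq0 orbb => /eqP.
Qed.
From mathcomp Require Import ring lra.

Lemma CS2 {R : realType} {n : nat} (u v : 'rV[R]_n) :
  dotv u v ^+ 2 <= dotv u u * dotv v v.
Proof.
have [v0|vn0] := eqVneq (dotv v v) 0.
  by rewrite (dot_eq0 _ v0) dotC !dot0l expr0n mulr0.
have cpos : 0 < dotv v v by rewrite lt0r vn0 dot_ge0.
set t := dotv u v / dotv v v.
have h := dot_ge0 (u - t *: v).
rewrite dotBl !dotBr !dotZl !dotZr (dotC v u) in h.
have h2 := mulr_ge0 (ltW cpos) h.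
have e : dotv v v * (dotv u u - t * dotv u v - (t * dotv u v - t * (t * dotv v v))) =
  dotv u u * dotv v v - dotv u v ^+ 2.
  by rewrite /t; field; exact: vn0.
by rewrite -subr_ge0 -e.
Qed.

Lemma enorm_ge0 {R : realType} {n : nat} (u : 'rV[R]_n) : 0 <= enorm u.
Proof. exact: sqrtr_ge0. Qed.

Lemma enorm_sq {R : realType} {n : nat} (u : 'rV[R]_n) : enorm u ^+ 2 = dotv u u.
Proof. by rewrite /enorm sqr_sqrtr // dot_ge0. Qed.

Lemma sqrt_le_of {R : realType} (a b : R) : 0 <= b -> a <= b ^+ 2 -> Num.sqrt a <= b.
Proof.
move=> hb hab; rewrite -(ger0_norm hb) -sqrtr_sqr; exact: ler_wsqrtr.
Qed.

Lemma CS_abs {R : realType} {n : nat} (u v : 'rV[R]_n) :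
  `|dotv u v| <= enorm u * enorm v.
Proof.
rewrite -sqrtr_sqr /enorm -sqrtrM ?dot_ge0 //; apply: ler_wsqrtr; exact: CS2.
Qed.

Lemma CS {R : realType} {n : nat} (u v : 'rV[R]_n) :
  dotv u v <= enorm u * enorm v.
Proof. exact: le_trans (ler_norm _) (CS_abs u v). Qed.

Lemma enormD {R : realType} {n : nat} (u v : 'rV[R]_n) :
  enorm (u + v) <= enorm u + enorm v.
Proof.
apply: sqrt_le_of; first by rewrite addr_ge0 ?enorm_ge0.
rewrite dotDl !dotDr (dotC v u) sqrrD !enorm_sq.
have := CS u v; lra.
Qed.

Lemma enormZ {R : realType} {n : nat} (a : R) (u : 'rV[R]_n) :
  enorm (a *: u) = `|a| * enorm u.
Proof.
by rewrite /enorm dotZl dotZr mulrA -expr2 sqrtrM ?sqr_ge0 // sqrtr_sqr.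
Qed.

Lemma enormN {R : realType} {n : nat} (u : 'rV[R]_n) : enorm (- u) = enorm u.
Proof. by rewrite -scaleN1r enormZ normrN normr1 mul1r. Qed.

Lemma enormB {R : realType} {n : nat} (u v : 'rV[R]_n) : enorm (u - v) = enorm (v - u).
Proof. by rewrite -enormN opprB. Qed.

Lemma enorm0 {R : realType} {n : nat} : enorm (0 : 'rV[R]_n) = 0.
Proof. by rewrite /enorm dot0l sqrtr0. Qed.

Lemma enorm_sum {R : realType} {n m : nat} (F : 'I_m -> 'rV[R]_n) :
  enorm (\sum_(j < m) F j) <= \sum_(j < m) enorm (F j).
Proof.
apply: (big_ind2 (fun a b => enorm a <= b)); first by rewrite enorm0.
  by move=> a1 b1 a2 b2 h1 h2; apply: le_trans (enormD _ _) (lerD h1 h2).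
by [].
Qed.

Lemma enorm_conv {R : realType} {n m : nat} (w : 'rV[R]_m) (F : 'I_m -> 'rV[R]_n) M :
  simplex w -> (forall j, enorm (F j) <= M) ->
  enorm (\sum_(j < m) w 0 j *: F j) <= M.
Proof.
move=> [w0 w1] hF.
apply: le_trans (enorm_sum _) _.
apply: (@le_trans _ _ (\sum_(j < m) w 0 j * M)).
  apply: ler_sum => j _; rewrite enormZ ger0_norm //; exact: ler_wpM2l.
by rewrite -mulr_suml w1 mul1r.
Qed.

Lemma grad_dot {R : realType} {n : nat} (f : 'rV[R]_n -> R) p v :
  'd f p v = dotv (grad f p) v.
Proof.
rewrite {1}(row_sum_delta v) linear_sum /dotv; apply: eq_bigr => i _.
by rewrite linearZ /= mxE mulrC.
Qed.

Lemma phi_derive {R : realType} {n : nat} (f : 'rV[R]_n -> R)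
  (hd : forall x, differentiable f x) (y e : 'rV[R]_n) (t : R) :
  is_derive t 1 (fun s : R => f (y + s *: e)) (dotv (grad f (y + t *: e)) e).
Proof.
have eqf : (fun h : R => h^-1 *: (((fun s : R => f (y + s *: e)) \o shift t) (h *: 1)
              - f (y + t *: e))) =
           (fun h : R => h^-1 *: ((f \o shift (y + t *: e)) (h *: e) - f (y + t *: e))).
  rewrite funeqE => h /=.
  suff -> : y + (h%:A + t) *: e = h *: e + (y + t *: e). reflexivity.
  by rewrite -[h%:A]/(h * 1) mulr1 scalerDl addrCA.
have hder : derivable f (y + t *: e) e by exact: diff_derivable.
split.
  by rewrite /derivable eqf.
by rewrite /derive eqf -/(derive f (y + t *: e) e) deriveE // grad_dot.
Qed.

Lemma mvt_bound {R : realType} {n : nat} (f : 'rV[R]_n -> R) (Lf : R)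
  (hd : forall x, differentiable f x)
  (hl : forall u v, enorm (grad f u - grad f v) <= Lf * enorm (u - v))
  (hLf : 0 <= Lf) (x y : 'rV[R]_n) :
  `|f x - f y - dotv (grad f y) (x - y)| <= Lf * dotv (x - y) (x - y).
Proof.
set e := x - y.
have cont : {within `[0, 1], continuous (fun s : R => f (y + s *: e))}%classic.
  apply: derivable_within_continuous => s _.
  by have [] := phi_derive _ hd y e s.
have [c hc hmvt] := MVT (f := fun s : R => f (y + s *: e))
  (df := fun s => dotv (grad f (y + s *: e)) e) ltr01
  (fun s _ => phi_derive _ hd y e s) cont.
move: hmvt; rewrite scale1r scale0r addr0 subr0 mulr1.
have -> : y + e = x by rewrite /e addrC subrK.
move=> ->.
rewrite -dotBl.
apply: le_trans (CS_abs _ _) _.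
have h1 := hl (y + c *: e) y.
have e2 : y + c *: e - y = c *: e by rewrite addrC addKr.
rewrite e2 enormZ in h1.
have hc1 : `|c| <= 1.
  move: hc; rewrite in_itv /= => /andP[c0 c1]; rewrite ger0_norm ?ltW //.
rewrite -enorm_sq expr2 mulrA.
apply: ler_wpM2r; first exact: enorm_ge0.
apply: le_trans h1 _.
rewrite mulrA; apply: ler_wpM2r; first exact: enorm_ge0.
by rewrite -[X in _ <= X]mulr1; apply: ler_wpM2l.
Qed.

Lemma quad_nonneg {R : realType} (A B : R) : 0 <= B ->
  (forall t, 0 < t -> t <= 1 -> 0 <= t * A + t ^+ 2 * B) -> 0 <= A.
Proof.
move=> hB h; case: (lerP 0 A) => // hA.
have hD : 0 < B - A by lra.
set t := - A / (2 * (B - A)).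
have h2D : 0 < 2 * (B - A) by lra.
have ht0 : 0 < t by rewrite /t divr_gt0 // oppr_gt0.
have htD : t * (2 * (B - A)) = - A by rewrite /t mulfVK // gt_eqF.
have ht1 : t <= 1.
  rewrite /t ler_pdivrMr // mul1r; lra.
have := h t ht0 ht1.
have key : 2 * (B - A) * (A + t * B) = A * (B - 2 * A).
  rewrite mulrDr mulrA (mulrC _ t) htD; ring.
have neg : A + t * B < 0.
  have : A * (B - 2 * A) < 0 by rewrite nmulr_rlt0 //; lra.
  rewrite -key => hk.
  by rewrite -(pmulr_rlt0 _ h2D).
have : t * A + t ^+ 2 * B = t * (A + t * B) by rewrite expr2; ring.
move=> ->; rewrite pmulr_rge0 //; lra.
Qed.

Lemma simplex_comb {R : realType} {m : nat} (l mu : 'rV[R]_m) (t : R) :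
  simplex l -> simplex mu -> 0 <= t -> t <= 1 -> simplex (l + t *: (mu - l)).
Proof.
move=> [l0 l1] [m0 m1] t0 t1; split.
  move=> j; rewrite !mxE.
  have -> : l 0 j + t * (mu 0 j + - l 0 j) = (1 - t) * l 0 j + t * mu 0 j by ring.
  by rewrite addr_ge0 // mulr_ge0 // subr_ge0.
have -> : \sum_(j < m) (l + t *: (mu - l)) 0 j =
   \sum_(j < m) l 0 j + t * (\sum_(j < m) mu 0 j - \sum_(j < m) l 0 j).
  rewrite -sumrB mulr_sumr -big_split; apply: eq_bigr => j _; by rewrite !mxE.
by rewrite l1 m1 subrr mulr0 addr0.
Qed.

Lemma DFmulD {R : realType} {m n : nat} (f : 'I_m -> 'rV[R]_n -> R) y a b :
  DFmul f y (a + b) = DFmul f y a + DFmul f y b.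
Proof. rewrite /DFmul -big_split; apply: eq_bigr => j _; by rewrite mxE scalerDl. Qed.

Lemma DFmulZ {R : realType} {m n : nat} (f : 'I_m -> 'rV[R]_n -> R) y (t : R) a :
  DFmul f y (t *: a) = t *: DFmul f y a.
Proof. rewrite /DFmul scaler_sumr; apply: eq_bigr => j _; by rewrite mxE scalerA. Qed.

Lemma DFmulB {R : realType} {m n : nat} (f : 'I_m -> 'rV[R]_n -> R) y a b :
  DFmul f y (a - b) = DFmul f y a - DFmul f y b.
Proof. by rewrite DFmulD -scaleN1r DFmulZ scaleN1r. Qed.

Lemma ring_aux {R : realType} (t S tau dw ww S0 dd : R) :
  t * (S + tau * dw) + t ^+ 2 * (tau / 2 * ww) =
  S0 + t * S + tau / 2 * (dd + t * dw + (t * dw + t * (t * ww)))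
  - (S0 + tau / 2 * dd).
Proof. by rewrite expr2; field. Qed.

Lemma opt_cond {R : realType} {m n : nat} (f : 'I_m -> 'rV[R]_n -> R) tau x y lam mu :
  0 < tau -> is_argmin_simplex f tau x y lam -> simplex mu ->
  0 <= \sum_(j < m) (mu 0 j - lam 0 j) * (f j x - f j y)
       + tau * dotv (DFmul f y lam) (DFmul f y mu - DFmul f y lam).
Proof.
move=> htau [hl hmin] hmu.
set d := DFmul f y lam; set w := DFmul f y mu - d.
set S := \sum_(j < m) (mu 0 j - lam 0 j) * (f j x - f j y).
set S0 := \sum_(j < m) lam 0 j * (f j x - f j y).
have hB : 0 <= tau / 2 * dotv w w by rewrite mulr_ge0 ?dot_ge0 // divr_ge0 // ltW.
apply: (quad_nonneg _ _ hB) => t t0 t1.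
have := hmin _ (simplex_comb _ _ _ hl hmu (ltW t0) t1).
rewrite /lam_obj DFmulD DFmulZ DFmulB -/d -/w !enorm_sq; clearbody w.
have -> : \sum_(j < m) (lam + t *: (mu - lam)) 0 j * (f j x - f j y) = S0 + t * S.
  rewrite /S0 /S mulr_sumr -big_split; apply: eq_bigr => j _; by rewrite !mxE mulrDl -mulrA.
rewrite -/S0 dotDl !dotDr !dotZl !dotZr (dotC w d).
move=> h.
by rewrite (ring_aux _ _ _ _ _ S0 (dotv d d)) subr_ge0.
Qed.

Lemma proj_cond {R : realType} {m n : nat} (f : 'I_m -> 'rV[R]_n -> R) x z p c :
  is_proj (convgrad f x) z p -> convgrad f x c -> dotv (c - p) (z - p) <= 0.
Proof.
move=> [[nu [hnu ep]] hmin] [mu [hmu ec]].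
have hB : 0 <= dotv (c - p) (c - p) by exact: dot_ge0.
suff : 0 <= -2 * dotv (c - p) (z - p) by lra.
apply: (quad_nonneg _ _ hB) => t t0 t1.
have hc : convgrad f x (p + t *: (c - p)).
  exists (nu + t *: (mu - nu)); split; first by apply: simplex_comb => //; exact: ltW.
  by rewrite DFmulD DFmulZ DFmulB -ep -ec.
have := hmin _ hc; rewrite /enorm ler_sqrt ?dot_ge0 //.
have -> : z - (p + t *: (c - p)) = (z - p) - t *: (c - p).
  by rewrite opprD addrA.
move: (z - p) (c - p) => q w.
rewrite !dotBl !dotBr !dotZl !dotZr (dotC w q).
move: (dotv q q) (dotv q w) (dotv w w) => a b cc.
rewrite expr2 => h; nra.
Qed.

Lemma final_sqrt {R : realType} (N C2 L dl tau : R) :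
  0 <= C2 -> 0 <= L -> 0 < tau -> 0 <= dl ->
  N <= C2 * L * dl + 4 * L * dl ^+ 2 / tau ->
  Num.sqrt N <= Num.sqrt (C2 * L) * Num.sqrt dl + Num.sqrt (10 * L / tau) * dl.
Proof.
move=> hC hL ht hd hN.
set S := Num.sqrt (C2 * L) * Num.sqrt dl.
set T := Num.sqrt (10 * L / tau) * dl.
have S0 : 0 <= S by rewrite mulr_ge0 ?sqrtr_ge0.
have T0 : 0 <= T by rewrite mulr_ge0 ?sqrtr_ge0.
have S2 : S ^+ 2 = C2 * L * dl.
  by rewrite /S exprMn !sqr_sqrtr // mulr_ge0.
have T2 : T ^+ 2 = 10 * L * dl ^+ 2 / tau.
  rewrite /T exprMn sqr_sqrtr; last by rewrite divr_ge0 ?mulr_ge0 // ltW.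
  by rewrite mulrAC.
apply: sqrt_le_of; first by rewrite addr_ge0.
have h4 : 4 * L * dl ^+ 2 / tau <= 10 * L * dl ^+ 2 / tau.
  rewrite ler_pM2r ?invr_gt0 //; rewrite -!mulrA; apply: ler_wpM2r; last by lra.
  by rewrite mulr_ge0 // sqr_ge0.
rewrite sqrrD S2 T2.
have : 0 <= S * T *+ 2 by rewrite mulrn_wge0 // mulr_ge0.
lra.
Qed.

Lemma combine {R : realType} (N A1 A2 B1 B2 L dl tau G Nd Np Nx Ny Nz C1 : R) :
  0 < tau -> 0 <= L -> 0 <= dl -> Nz = dl / tau ->
  Nd <= L * Ny + G -> Np <= L * Nx + G -> Nx + Ny <= C1 ->
  A1 * tau <= 2 * (L * dl ^+ 2) -> A2 <= L * dl * (Nd + Nz) -> B1 <= 0 ->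
  B2 <= L * dl * (Nz + Np) -> N = A1 + A2 + B1 + B2 ->
  N <= (L * C1 + 2 * G) * L * dl + 4 * L * dl ^+ 2 / tau.
Proof.
move=> ht hL hd hz hNd hNp hC ha1 ha2 hb1 hb2 ->.
have a1 : A1 <= 2 * (L * dl ^+ 2) / tau by rewrite ler_pdivlMr.
have hLC : L * (Nx + Ny) <= L * C1 by apply: ler_wpM2l.
have s : Nd + Np + 2 * Nz <= L * C1 + 2 * G + 2 * (dl / tau) by rewrite hz; lra.
have hLd : 0 <= L * dl by rewrite mulr_ge0.
have ab : A2 + B2 <= L * dl * (L * C1 + 2 * G + 2 * (dl / tau)).
  apply: le_trans (lerD ha2 hb2) _.
  rewrite -mulrDr; apply: ler_wpM2l => //; lra.
have e : (L * C1 + 2 * G) * L * dl + 4 * L * dl ^+ 2 / tau =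
  2 * (L * dl ^+ 2) / tau + L * dl * (L * C1 + 2 * G + 2 * (dl / tau)).
  rewrite expr2; field; exact: lt0r_neq0.
rewrite e; lra.
Qed.

Lemma bigmax_ge0 {R : realType} {m : nat} (F : 'I_m -> R) :
  0 <= \big[Num.max/0]_(j < m) F j.
Proof. elim/big_rec: _ => // i x _ hx; by rewrite le_max hx orbT. Qed.

Lemma le_bigmax_R {R : realType} {m : nat} (F : 'I_m -> R) j :
  F j <= \big[Num.max/0]_(j < m) F j.
Proof. exact: le_bigmax. Qed.

Lemma enorm_le_sub {R : realType} {n : nat} (u v : 'rV[R]_n) :
  enorm u <= enorm (u - v) + enorm v.
Proof. by have := enormD (u - v) v; rewrite subrK. Qed.

Lemma diff_bound {R : realType} {m n : nat} (f : 'I_m -> 'rV[R]_n -> R) (Lj : 'I_m -> R)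
  (hlip : forall j u v, enorm (grad (f j) u - grad (f j) v) <= Lj j * enorm (u - v))
  (hLj : forall j, 0 <= Lj j) w x y :
  simplex w ->
  enorm (DFmul f y w - DFmul f x w) <= \big[Num.max/0]_(j < m) Lj j * enorm (x - y).
Proof.
move=> hw.
have -> : DFmul f y w - DFmul f x w =
  \sum_(j < m) w 0 j *: (grad (f j) y - grad (f j) x).
  by rewrite /DFmul -sumrB; apply: eq_bigr => j _; rewrite scalerBr.
apply: enorm_conv => // j.
apply: le_trans (hlip j y x) _; rewrite (enormB y x).
by apply: ler_wpM2r; [exact: enorm_ge0 | exact: le_bigmax_R].
Qed.

Lemma grad_bound {R : realType} {m n : nat} (f : 'I_m -> 'rV[R]_n -> R) (Lj : 'I_m -> R)
  (hlip : forall j u v, enorm (grad (f j) u - grad (f j) v) <= Lj j * enorm (u - v))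
  (hLj : forall j, 0 <= Lj j) w y :
  simplex w ->
  enorm (DFmul f y w) <= \big[Num.max/0]_(j < m) Lj j * enorm y
     + \big[Num.max/0]_(j < m) enorm (grad (f j) 0).
Proof.
move=> hw; apply: enorm_conv => // j.
apply: le_trans (enorm_le_sub _ (grad (f j) 0)) _.
apply: lerD; last exact: le_bigmax_R.
apply: le_trans (hlip j y 0) _; rewrite subr0.
by apply: ler_wpM2r; [exact: enorm_ge0 | exact: le_bigmax_R].
Qed.

Lemma sum_bound {R : realType} {m n : nat} (f : 'I_m -> 'rV[R]_n -> R) (Lj : 'I_m -> R)
  (hdiff : forall j x, differentiable (f j) x)
  (hlip : forall j u v, enorm (grad (f j) u - grad (f j) v) <= Lj j * enorm (u - v))
  (hLj : forall j, 0 <= Lj j) lam nu x y :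
  simplex lam -> simplex nu ->
  \sum_(j < m) (nu 0 j - lam 0 j) * (f j x - f j y) <=
  dotv (DFmul f y nu - DFmul f y lam) (x - y)
  + 2 * (\big[Num.max/0]_(j < m) Lj j * dotv (x - y) (x - y)).
Proof.
move=> [l0 l1] [n0 n1].
set K := \big[Num.max/0]_(j < m) Lj j * dotv (x - y) (x - y).
have hK : forall j, `|f j x - f j y - dotv (grad (f j) y) (x - y)| <= K.
  move=> j; apply: le_trans (mvt_bound _ _ (hdiff j) (hlip j) (hLj j) x y) _.
  by apply: ler_wpM2r; [exact: dot_ge0 | exact: le_bigmax_R].
have e1 : dotv (DFmul f y nu - DFmul f y lam) (x - y) =
    \sum_(j < m) (nu 0 j - lam 0 j) * dotv (grad (f j) y) (x - y).
  rewrite dotBl /DFmul !dot_suml -sumrB; apply: eq_bigr => j _.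
  by rewrite !dotZl mulrBl.
have e2 : 2 * K = \sum_(j < m) (nu 0 j + lam 0 j) * K.
  by rewrite -mulr_suml big_split /= n1 l1.
rewrite e1 e2 -big_split /=; apply: ler_sum => j _.
have := hK j; rewrite ler_norml => /andP[h1 h2].
have := n0 j; have := l0 j.
move: (nu 0 j) (lam 0 j) (f j x - f j y) (dotv (grad (f j) y) (x - y)) h1 h2 => a b c dd h1 h2 ha hb.
nra.
Qed.

Lemma eq_aux {R : realType} (N X Y A1 A2 B1 B2 : R) :
  X + Y = N -> X = A1 + A2 -> Y = B1 + B2 -> N = A1 + A2 + B1 + B2.
Proof. by move=> <- -> ->; rewrite !addrA. Qed.

Theorem mainTheorem5 (R : realType) (m n : nat)
  (f : 'I_m -> 'rV[R]_n -> R) (Lj : 'I_m -> R)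
  (hdiff : forall j x, differentiable (f j) x)
  (hcont : forall j, continuous (grad (f j)))
  (hLj : forall j, 0 <= Lj j)
  (hlip : forall j u v, enorm (grad (f j) u - grad (f j) v) <= Lj j * enorm (u - v))
  (C1 tau : R) (hC1 : 0 < C1) (htau : 0 < tau)
  (x y : 'rV[R]_n) (hxy : enorm x + enorm y <= C1)
  (lam : 'rV[R]_m) (hlam : is_argmin_simplex f tau x y lam)
  (p : 'rV[R]_n) (hp : is_proj (convgrad f x) (tau^-1 *: (y - x)) p) :
  let L := \big[Num.max/0]_(j < m) Lj j in
  let C2 := L * C1 + 2 * \big[Num.max/0]_(j < m) enorm (grad (f j) 0) in
  enorm (DFmul f y lam - p)
    <= Num.sqrt (C2 * L) * Num.sqrt (enorm (x - y))
       + Num.sqrt (10 * L / tau) * enorm (x - y).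
Proof.
cbv zeta.
set L := \big[Num.max/0]_(j < m) Lj j.
have hL0 : 0 <= L := bigmax_ge0 _.
have hG0 : 0 <= \big[Num.max/0]_(j < m) enorm (grad (f j) 0) := bigmax_ge0 _.
case: (hlam) => hls _.
case: (hp) => [[nu [hnu ep]] _].
have hopt := opt_cond _ _ _ _ _ _ htau hlam hnu.
have hsum := sum_bound f Lj hdiff hlip hLj lam nu x y hls hnu.
have hcd' : convgrad f x (DFmul f x lam) by exists lam.
have hproj := proj_cond _ _ _ _ _ hp hcd'.
have hdd' := diff_bound f Lj hlip hLj lam x y hls.
have hpp' := diff_bound f Lj hlip hLj nu x y hnu.
have hNd := grad_bound f Lj hlip hLj lam y hls.
have hNp := grad_bound f Lj hlip hLj nu x hnu.
rewrite -ep in hpp' hNp.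
move: hopt hsum hproj hdd' hpp' hNd hNp.
set G := \big[Num.max/0]_(j < m) enorm (grad (f j) 0).
set d := DFmul f y lam; set d' := DFmul f x lam; set p' := DFmul f y nu.
set z := tau^-1 *: (y - x); set dl := enorm (x - y).
set S := \sum_(j < m) _.
move=> hopt hsum hproj hdd' hpp' hNd hNp.
rewrite -/L in hsum hdd' hpp' hNd hNp.
have hez : dotv (p' - d) (x - y) = - (tau * dotv (p' - d) z).
  have -> : x - y = (- tau) *: z.
    by rewrite /z scalerA mulNr divff ?gt_eqF // scaleN1r opprB.
  by rewrite dotZr mulNr.
have hdl2 : dotv (x - y) (x - y) = dl ^+ 2 by rewrite enorm_sq.
have hA1 : (- dotv (p' - d) (d - z)) * tau <= 2 * (L * dl ^+ 2).
  rewrite dotBr; rewrite hez hdl2 in hsum; rewrite (dotC d) in hopt.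
  lra.
have hNz : enorm z = dl / tau.
  rewrite /z enormZ ger0_norm ?invr_ge0 ?ltW // (enormB y x) -/dl; exact: mulrC.
have hA2 : dotv (p' - p) (d - z) <= L * dl * (enorm d + enorm z).
  apply: le_trans (CS _ _) _.
  apply: ler_pM; [exact: enorm_ge0 | exact: enorm_ge0 | | ].
    exact: hpp'.
  by apply: le_trans (enormD _ _) _; rewrite enormN.
have hB2 : - dotv (d' - d) (z - p) <= L * dl * (enorm z + enorm p).
  rewrite -dotNl; apply: le_trans (CS _ _) _.
  apply: ler_pM; [exact: enorm_ge0 | exact: enorm_ge0 | | ].
    rewrite enormN (enormB d' d); exact: hdd'.
  by apply: le_trans (enormD _ _) _; rewrite enormN.
have I3 : dotv (d - p) (d - z) + dotv (d - p) (z - p) = dotv (d - p) (d - p).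
  by rewrite -dotDr addrA subrK.
have I1 : dotv (d - p) (d - z) = - dotv (p' - d) (d - z) + dotv (p' - p) (d - z).
  by rewrite -dotNl -dotDl opprB addrA subrK.
have v2 : d' - p - (d' - d) = d - p by rewrite opprB addrC addrA subrK.
have I2 : dotv (d - p) (z - p) = dotv (d' - p) (z - p) + - dotv (d' - d) (z - p).
  by rewrite -dotBl v2.
have hNeq := eq_aux _ _ _ _ _ _ _ I3 I1 I2.
have hN := combine _ _ _ _ _ _ _ _ _ _ _ _ _ _ _ htau hL0 (enorm_ge0 _) hNz hNd hNp hxy hA1 hA2 hproj hB2 hNeq.
have hC2 : 0 <= L * C1 + 2 * G by rewrite addr_ge0 ?mulr_ge0 // ltW.
exact: (final_sqrt _ _ _ _ _ hC2 hL0 htau (enorm_ge0 _) hN).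
Qed.
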